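(* Let $(\Phi,D)$ be a domain-free continuous information algebra and $(\Psi,D)$ its associated labeled information algebra. Let $x\in D$ and $\psi,\phi\in\Phi$ with $\psi=\psi^{\Rightarrow x}$ and $\phi=\phi^{\Rightarrow x}$. Then $\psi\ll\phi$ implies $(\psi,x)\ll_x(\phi,x)$. Furthermore, if $(\Phi,D)$ is s-continuous, then $\psi\ll\phi$ if and only if $(\psi,x)\ll_x(\phi,x)$.
   Context: A domain-free information algebra $(\Phi,D)$ consists of a set $\Phi$, a lattice $D$, a combination $\otimes$ and a focusing $(\psi,x)\mapsto\psi^{\Rightarrow x}$ ($x\in D$) such that: $\otimes$ is associative, commutative with neutral element $e$; $(\psi^{\Rightarrow y})^{\Rightarrow x}=\psi^{\Rightarrow x\wedge y}$; $(\phi^{\Rightarrow x}\otimes\psi)^{\Rightarrow x}=\phi^{\Rightarrow x}\otimes\psi^{\Rightarrow x}$; every $\psi$ has some $x$ with $\psi^{\Rightarrow x}=\psi$; $\psi\otimes\psi^{\Rightarrow x}=\psi$. Order: $\psi\le\phi$ iff $\psi\otimes\phi=\phi$ (same definition in the labeled algebra below); suprema refer to this order. $a\ll b$ means: for every directed $X$ with $b\le\vee X$ there is $c\in X$ with $a\le c$. $(\Phi,D)$, with $D$ having a top element, is continuous (resp. s-continuous) if there exists $\Gamma\subseteq\Phi$, closed under combination and containing $e$, such that every directed subset of $\Gamma$ has a supremum in $\Phi$ and $\phi=\vee\{\psi\in\Gamma:\psi\ll\phi\}$ for all $\phi$ (resp. $\phi^{\Rightarrow x}=\vee\{\psi\in\Gamma:\psi=\psi^{\Rightarrow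 x}\ll\phi\}$ for all $\phi,x$). The associated labeled information algebra $(\Psi,D)$ has $\Psi=\{(\phi,x)\in\Phi\times D:\phi=\phi^{\Rightarrow x}\}$, labeling $d(\phi,x)=x$, combination $(\phi,x)\otimes(\psi,y)=(\phi\otimes\psi,x\vee y)$ and marginalization $(\phi,x)^{\downarrow y}=(\phi^{\Rightarrow y},y)$ for $y\le x$. $\Psi_x=\{(\phi,x)\in\Psi\}$, and $\ll_x$ is the way-below relation in the poset $(\Psi_x,\le)$. *)

(* Defs.v *)
From HB Require Import structures.
From mathcomp Require Import all_boot all_order.
Set Implicit Arguments. Unset Strict Implicit. Unset Printing Implicit Defensive.
Import Order.TTheory.
Local Open Scope order_scope.

(* Generic order-theoretic notions for a relation [le] on a type [T],
   restricted to a carrier [S : T -> Prop] (the poset (S, le)). *)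
Section Generic.
Variables (T : Type) (S : T -> Prop) (le : T -> T -> Prop).

Definition directed (X : T -> Prop) : Prop :=
  (exists y, X y) /\
  forall a b, X a -> X b -> exists c, X c /\ le a c /\ le b c.

Definition upper_in (X : T -> Prop) (u : T) : Prop :=
  S u /\ forall y, X y -> le y u.

Definition is_sup_in (X : T -> Prop) (s : T) : Prop :=
  upper_in X s /\ forall u, upper_in X u -> le s u.

Definition way_below_in (a b : T) : Prop :=
  forall X : T -> Prop, (forall y, X y -> S y) -> directed X ->
  forall s, is_sup_in X s -> le b s -> exists c, X c /\ le a c.
End Generic.

Section InfAlg.
Variables (disp : Order.disp_t) (D : latticeType disp) (Phi : Type).
Variables (comb : Phi -> Phi -> Phi) (e : Phi) (foc : Phi -> D -> Phi).

Definition df_infalg : Prop :=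
  (forall a b c, comb a (comb b c) = comb (comb a b) c) /\
      (forall a b, comb a b = comb b a) /\
      (forall a, comb e a = a) /\
      (forall psi x y, foc (foc psi y) x = foc psi (x `&` y)) /\
      (forall phi psi x, foc (comb (foc phi x) psi) x = comb (foc phi x) (foc psi x)) /\
      (forall psi, exists x, foc psi x = psi) /\
      (forall psi x, comb psi (foc psi x) = psi).

Definition ile (a b : Phi) : Prop := comb a b = b.

Definition allPhi : Phi -> Prop := fun _ => True.

Definition way_below (a b : Phi) : Prop := way_below_in allPhi ile a b.

Definition comb_closed (G : Phi -> Prop) : Prop :=
  (forall a b, G a -> G b -> G (comb a b)) /\ G e.

Definition dir_sups (G : Phi -> Prop) : Prop :=
  forall X : Phi -> Prop, (forall y, X y -> G y) -> directed ile X ->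
  exists s, is_sup_in allPhi ile X s.

Definition continuous : Prop :=
  exists G : Phi -> Prop, comb_closed G /\ dir_sups G /\
    forall phi, is_sup_in allPhi ile (fun psi => G psi /\ way_below psi phi) phi.

Definition s_continuous : Prop :=
  exists G : Phi -> Prop, comb_closed G /\ dir_sups G /\
    forall phi x, is_sup_in allPhi ile
      (fun psi => G psi /\ psi = foc psi x /\ way_below psi phi) (foc phi x).

Definition Psi (p : Phi * D) : Prop := p.1 = foc p.1 p.2.
Definition lcomb (p q : Phi * D) : Phi * D := (comb p.1 q.1, p.2 `|` q.2).
Definition lle (p q : Phi * D) : Prop := lcomb p q = q.
Definition Psi_at (x : D) (p : Phi * D) : Prop := Psi p /\ p.2 = x.
Definition lway_below_at (x : D) (p q : Phi * D) : Prop :=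
  way_below_in (Psi_at x) lle p q.
End InfAlg.

(* Main.v *)
Require Import Defs.
From mathcomp Require Import all_boot all_order.
Import Order.TTheory.
Local Open Scope order_scope.

Section Aux.
Variables (disp : Order.disp_t) (D : tLatticeType disp) (Phi : Type)
  (comb : Phi -> Phi -> Phi) (e : Phi) (foc : Phi -> D -> Phi).
Hypothesis HA : df_infalg comb e foc.

Notation le := (ile comb).
Notation wb := (way_below comb).

Lemma cA a b c : comb a (comb b c) = comb (comb a b) c.
Proof. move: HA => [H [_ [_ [_ [_ [_ _]]]]]]; exact: H. Qed.
Lemma cC a b : comb a b = comb b a.
Proof. move: HA => [_ [H [_ [_ [_ [_ _]]]]]]; exact: H. Qed.
Lemma c0 a : comb e a = a.
Proof. move: HA => [_ [_ [H [_ [_ [_ _]]]]]]; exact: H. Qed.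
Lemma fT psi x y : foc (foc psi y) x = foc psi (x `&` y).
Proof. move: HA => [_ [_ [_ [H [_ [_ _]]]]]]; exact: H. Qed.
Lemma fC phi psi x : foc (comb (foc phi x) psi) x = comb (foc phi x) (foc psi x).
Proof. move: HA => [_ [_ [_ [_ [H [_ _]]]]]]; exact: H. Qed.
Lemma fS psi : exists x, foc psi x = psi.
Proof. move: HA => [_ [_ [_ [_ [_ [H _]]]]]]; exact: H. Qed.
Lemma fA psi x : comb psi (foc psi x) = psi.
Proof. move: HA => [_ [_ [_ [_ [_ [_ H]]]]]]; exact: H. Qed.

Lemma cI a : comb a a = a.
Proof. case: (fS a) => x Hx. by rewrite -{2}Hx fA. Qed.
Lemma le_refl a : le a a.
Proof. exact: cI. Qed.
Lemma le_trans a b c : le a b -> le b c -> le a c.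
Proof. rewrite /ile => H1 H2. by rewrite -H2 cA H1. Qed.
Lemma le_anti a b : le a b -> le b a -> a = b.
Proof. rewrite /ile => H1 H2. by rewrite -H1 cC H2. Qed.
Lemma le_cl a b : le a (comb a b).
Proof. by rewrite /ile cA cI. Qed.
Lemma le_cr a b : le b (comb a b).
Proof. rewrite cC; exact: le_cl. Qed.
Lemma le_club a b u : le a u -> le b u -> le (comb a b) u.
Proof. rewrite /ile => H1 H2. by rewrite -cA H2 H1. Qed.
Lemma le_e a : le e a.
Proof. exact: c0. Qed.
Lemma foc_le a x : le (foc a x) a.
Proof. by rewrite /ile cC fA. Qed.
Lemma foc_mono a b x : le a b -> le (foc a x) (foc b x).
Proof.
move=> H. have H' : le (foc a x) b := le_trans _ _ _ (foc_le a x) H.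
by rewrite /ile -fC H'.
Qed.
Lemma foc_idem a x : foc (foc a x) x = foc a x.
Proof. by rewrite fT meetxx. Qed.
Lemma foc_e x : foc e x = e.
Proof. apply: le_anti; [exact: foc_le | exact: le_e]. Qed.

Lemma wb_le a b : wb a b -> le a b.
Proof.
move=> H.
have Hd : directed le (fun y => y = b).
  split; first by exists b.
  by move=> ? ? -> ->; exists b; split=> //; split; apply: le_refl.
have Hs : is_sup_in (allPhi (Phi:=Phi)) le (fun y => y = b) b.
  split; first by split => // y ->; apply: le_refl.
  by move=> u [_ Hu]; apply: Hu.
have [c [Hc1 Hc2]] := H (fun y => y = b) (fun _ _ => I) Hd b Hs (le_refl b).
by rewrite Hc1 in Hc2.
Qed.

Lemma wb_mono a b c : wb a b -> le b c -> wb a c.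
Proof.
move=> H Hbc X HX Hd s Hs Hcs. apply: (H X HX Hd s Hs). exact: le_trans _ _ _ Hbc Hcs.
Qed.

Lemma wb_e b : wb e b.
Proof.
move=> X _ [[y Hy] _] s _ _. exists y; split=> //; exact: le_e.
Qed.

Lemma wb_join a b c : wb a c -> wb b c -> wb (comb a b) c.
Proof.
move=> Ha Hb X HX Hd s Hs Hcs.
have [c1 [X1 H1]] := Ha X HX Hd s Hs Hcs.
have [c2 [X2 H2]] := Hb X HX Hd s Hs Hcs.
have [c3 [X3 [H13 H23]]] := (proj2 Hd) c1 c2 X1 X2.
exists c3; split=> //; apply: le_club; [exact: le_trans _ _ _ H1 H13|exact: le_trans _ _ _ H2 H23].
Qed.

Lemma lle_x (x : D) a b : lle comb (a, x) (b, x) <-> le a b.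
Proof.
rewrite /lle /lcomb /= joinxx; split => [[]|->] //.
Qed.

Lemma pair_x (x : D) (y : Phi * D) : Psi_at foc x y -> y = (y.1, x) /\ y.1 = foc y.1 x.
Proof. case: y => [a b] H. destruct H as [Hp Hb]; simpl in *; subst b; by split. Qed.

Lemma part1 (Hcont : continuous comb e) (x : D) (psi phi : Phi) :
  way_below comb psi phi -> lway_below_at comb foc x (psi, x) (phi, x).
Proof.
move=> Hwb X HX Hd s Hs Hphis.
move: Hcont; rewrite /continuous /comb_closed => -[G [[Gc Ge] [Gs Gd]]].
pose Y := fun g => G g /\ exists chi, X (chi, x) /\ wb g chi.
have HdY : directed le Y.
  split.
    have [[p Hp] _] := Hd.
    have [Ep _] := pair_x _ _ (HX _ Hp).
    exists e; split=> //; exists p.1; rewrite -Ep; split=> //; exact: wb_e.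
  move=> a b [Ga [ca [Xa Wa]]] [Gb [cb [Xb Wb]]].
  have [c [Xc [Hac Hbc]]] := (proj2 Hd) _ _ Xa Xb.
  have [Ec _] := pair_x _ _ (HX _ Xc).
  rewrite Ec in Xc Hac Hbc.
  move/lle_x: Hac => Hac; move/lle_x: Hbc => Hbc.
  exists (comb a b); split.
    split; first exact: Gc.
    exists c.1; split=> //; apply: wb_join; [exact: wb_mono Wa Hac|exact: wb_mono Wb Hbc].
  split; [exact: le_cl|exact: le_cr].
have [tau Htau] := Gs Y (fun y Hy => proj1 Hy) HdY.
have [[_ Utau] Ltau] := Htau.
have [Es _] := pair_x _ _ (proj1 (proj1 Hs)).
have Hup : upper_in (Psi_at foc x) (lle comb) X (foc tau x, x).
  split; first by split; [exact: esym (foc_idem _ _)|].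
  move=> y Hy; have [Ey Fy] := pair_x _ _ (HX _ Hy).
  rewrite Ey in Hy *; apply/lle_x; rewrite Fy; apply: foc_mono.
  have [_ Lc] := Gd y.1. apply: Lc; split=> // g [Gg Wg].
  apply: Utau; split=> //; exists y.1; split=> //.
have Hsig := (proj2 Hs) _ Hup.
rewrite Es in Hsig Hphis; move/lle_x: Hsig => Hsig; move/lle_x: Hphis => Hphis.
have Hphitau : le phi tau.
  apply: (le_trans _ _ _ Hphis); apply: (le_trans _ _ _ Hsig); exact: foc_le.
have [g [[Gg [chi [Xchi Wchi]]] Hpg]] := Hwb Y (fun _ _ => I) HdY tau Htau Hphitau.
exists (chi, x); split=> //; apply/lle_x.
exact: le_trans _ _ _ Hpg (wb_le _ _ Wchi).
Qed.

Lemma part2 (Hsc : s_continuous comb e foc) (x : D) (psi phi : Phi)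
  (Hphi : phi = foc phi x) :
  lway_below_at comb foc x (psi, x) (phi, x) -> way_below comb psi phi.
Proof.
move=> Hl Z _ HdZ s Hs Hphis.
move: Hsc; rewrite /s_continuous /comb_closed => -[G [[Gc Ge] [Gs Gd]]].
pose X1 := fun g => G g /\ g = foc g x /\ exists z, Z z /\ wb g z.
pose X := fun p : Phi * D => X1 p.1 /\ p.2 = x.
have HdX1 : directed le X1.
  split.
    have [[z Hz] _] := HdZ.
    exists e; split=> //; split; first exact: esym (foc_e x).
    exists z; split=> //; exact: wb_e.
  move=> a b [Ga [Ea [za [Za Wa]]]] [Gb [Eb [zb [Zb Wb]]]].
  have [z [Zz [Haz Hbz]]] := (proj2 HdZ) _ _ Za Zb.
  exists (comb a b); split.
    split; first exact: Gc.
    split; first by rewrite {2}Ea fC -Ea -Eb.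
    exists z; split=> //; apply: wb_join; [exact: wb_mono Wa Haz|exact: wb_mono Wb Hbz].
  split; [exact: le_cl|exact: le_cr].
have HX : forall y, X y -> Psi_at foc x y.
  case=> a b; rewrite /X /X1 /= => -[[_ [Ea _]] Eb]; subst b; by split.
have Xp : forall y, X y -> y = (y.1, x).
  by case=> a b; rewrite /X /= => -[_ ->].
have HdX : directed (lle comb) X.
  split.
    have [[g Hg] _] := HdX1. by exists (g, x).
  move=> p q Hp Hq. rewrite (Xp _ Hp) (Xp _ Hq).
  have [c [Xc [Hpc Hqc]]] := (proj2 HdX1) _ _ (proj1 Hp) (proj1 Hq).
  exists (c, x); split=> //; split; exact/lle_x.
have [tau Htau] := Gs X1 (fun y Hy => proj1 Hy) HdX1.
have [[_ Utau] Ltau] := Htau.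
have Hsup : is_sup_in (Psi_at foc x) (lle comb) X (foc tau x, x).
  split.
    split; first by split; [exact: esym (foc_idem _ _)|].
    move=> y Hy; rewrite (Xp _ Hy); apply/lle_x.
    have [_ [Ey _]] := proj1 Hy. rewrite Ey; apply: foc_mono; exact: (Utau _ (proj1 Hy)).
  move=> u [Pu Uu]. have [Eu Fu] := pair_x _ _ Pu. rewrite Eu; apply/lle_x.
  rewrite Fu; apply: foc_mono; apply: Ltau; split=> // g Hg.
  have Hgx : X (g, x) by split.
  have := Uu _ Hgx; rewrite Eu; move/lle_x; done.
have Hst : le (foc s x) tau.
  have [_ Ls] := Gd s x. apply: Ls; split=> // g [Gg [Eg Wg]].
  have [c [Zc Hgc]] := Wg Z (fun _ _ => I) HdZ s Hs (le_refl s).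
  have Hct : le (foc c x) tau.
    have [_ Lc] := Gd c x. apply: Lc; split=> // h [Gh [Eh Wh]].
    apply: Utau; split=> //; split=> //; by exists c.
  rewrite Eg; apply: (le_trans _ _ _ _ Hct); exact: foc_mono.
have Hphis' : lle comb (phi, x) (foc tau x, x).
  apply/lle_x; rewrite Hphi.
  apply: (le_trans _ (foc (foc s x) x)).
    rewrite foc_idem; exact: foc_mono.
  exact: foc_mono.
have [c [Xc Hpc]] := Hl X HX HdX _ Hsup Hphis'.
rewrite (Xp _ Xc) in Hpc; move/lle_x: Hpc => Hpc.
have [_ [_ [z [Zz Wz]]]] := proj1 Xc.
exists z; split=> //; exact: le_trans _ _ _ Hpc (wb_le _ _ Wz).
Qed.

End Aux.

Theorem lemma4p6 (disp : Order.disp_t) (D : tLatticeType disp) (Phi : Type)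
  (comb : Phi -> Phi -> Phi) (e : Phi) (foc : Phi -> D -> Phi)
  (HA : df_infalg comb e foc) (Hcont : continuous comb e)
  (x : D) (psi phi : Phi) (Hpsi : psi = foc psi x) (Hphi : phi = foc phi x) :
  (way_below comb psi phi -> lway_below_at comb foc x (psi, x) (phi, x)) /\
  (s_continuous comb e foc ->
     (way_below comb psi phi <-> lway_below_at comb foc x (psi, x) (phi, x))).
Proof.
have P1 := @part1 disp D Phi comb e foc HA Hcont x psi phi.
split; first exact: P1.
move=> Hsc; split; first exact: P1.
exact: (@part2 disp D Phi comb e foc HA Hsc x psi phi Hphi).
Qed.
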